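(* There is a theory $\mathcal{T}$ — for instance the theory whose domain is the integers $\mathbb{Z}$, with integer constants, increment ($x+1$), decrement ($x-1$) and equality — for which the following problem is undecidable: given a TSL($\mathcal{T}$) formula $\phi$ over finite sets $R$ of state variables and $I$ of input variables, decide whether $\phi$ is realizable, i.e. whether there exists a theory Mealy machine realizing $\phi$. In other words, the synthesis problem for TSL modulo theories is undecidable.
   Context: A theory $\mathcal{T}$ consists of a signature (constants, functions, predicates) with a fixed interpretation over a domain $\mathbb{T}$. For a set of variables $V$, $E^{\mathbb{T}}_{\mathcal{T}}(V)$ denotes the terms and $E^{\mathbb{B}}_{\mathcal{T}}(V)$ the formulas of $\mathcal{T}$ with free variables in $V$. Let $R$ be a finite set of state variables and $I$ a finite set of input variables; valuations are $\mathbf{R}=R\to\mathbb{T}$ and $\mathbf{I}=I\to\mathbb{T}$. An update function $\mathbf{u}$ assigns to each $r\in R$ a term $\mathbf{u}(r)\in E^{\mathbb{T}}_{\mathcal{T}}(R\cup I)$; $\mathbf{U}$ is the set of update functions, and $\mathbf{u}[\mathbf{r},\mathbf{i}]\in\mathbf{R}$ is given by $\mathbf{u}[\mathbf{r},\mathbf{i}](r)=$ the value of $\mathbf{u}(r)$ under $\mathbf{r},\mathbf{i}$. TSL($\mathcal{T}$) formulas are generated by: atomic propositions $p\in E^{\mathbb{B}}_{\mathcal{T}}(R\cup I)$; update atoms $[r\leftarrow e]$ with $r\in R$, $e\in E^{\mathbb{T}}_{\mathcal{T}}(R\cup I)$; $\mathrm{true}$, $\mathrm{false}$; $\neg\phi$,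 $\phi\wedge\psi$, $\phi\,\mathbf{U}\,\psi$, $\mathbf{X}\phi$ (with $\mathbf{F}\phi=\mathrm{true}\,\mathbf{U}\,\phi$, $\mathbf{G}\phi=\neg\mathbf{F}\neg\phi$). Semantics over traces $\rho=\rho_0\rho_1\cdots\in(\mathbf{R}\times\mathbf{I})^\omega$, $\rho_j=(\mathbf{r}_j,\mathbf{i}_j)$: $\rho\models p$ iff $(\mathbf{r}_0,\mathbf{i}_0)\models p$; $\rho\models[r\leftarrow e]$ iff $\mathbf{r}_1(r)$ equals the value of $e$ under $(\mathbf{r}_0,\mathbf{i}_0)$; Boolean and temporal operators as in LTL. A theory Mealy machine is $(Q,q_0,P,\mathbf{r}_0,\delta,\mu)$ with finite state set $Q$, initial state $q_0$, finite predicate set $P\subseteq E^{\mathbb{B}}_{\mathcal{T}}(R\cup I)$, initial valuation $\mathbf{r}_0\in\mathbf{R}$, transition function $\delta:Q\times 2^P\to Q$ and update selection $\mu:Q\times2^P\to\mathbf{U}$. For $\mathbf{v}=(\mathbf{r},\mathbf{i})$ let $P_{\mathbf{v}}=\{p\in P\mid \mathbf{v}\models p\}$. The run on input sequence $\mathbf{i}_0\mathbf{i}_1\cdots\in\mathbf{I}^\omega$ is $(q_0,\mathbf{r}_0)(q_1,\mathbf{r}_1)\cdots$ with $q_{k+1}=\delta(q_k,P_{(\mathbf{r}_k,\mathbf{i}_k)})$ and $\mathbf{r}_{k+1}=\mathbf{u}_k[\mathbf{r}_k,\mathbf{i}_k]$ where $\mathbf{u}_k=\mu(q_k,P_{(\mathbf{r}_k,\mathbf{i}_k)})$.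 The machine realizes $\phi$ if for every input sequence the induced trace $(\mathbf{r}_k,\mathbf{i}_k)_k$ satisfies $\phi$. *)

(* Defs.v *)
From mathcomp Require Import all_boot all_algebra.
Set Implicit Arguments. Unset Strict Implicit. Unset Printing Implicit Defensive.
Import GRing.Theory Num.Theory.
Local Open Scope ring_scope.

(* For a problem instance with R = {0..nR-1}, I = {0..nI-1}, well-formedness
   restricts indices below nR resp. nI. *)
Inductive tterm : Type :=
  | TConst of int
  | SVar of nat
  | IVar of nat
  | TInc of tterm
  | TDec of tterm.

Inductive tpred : Type :=
  | PEq of tterm & tterm
  | PNot of tpred
  | PAnd of tpred & tpred.

Definition valuation := nat -> int.

Fixpoint eval_term (rv iv : valuation) (t : tterm) : int :=
  match t with
  | TConst z => z
  | SVar n => rv n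
  | IVar n => iv n
  | TInc t => eval_term rv iv t + 1
  | TDec t => eval_term rv iv t - 1
  end.

Fixpoint eval_pred (rv iv : valuation) (p : tpred) : bool :=
  match p with
  | PEq a b => eval_term rv iv a == eval_term rv iv b
  | PNot p => ~~ eval_pred rv iv p
  | PAnd p q => eval_pred rv iv p && eval_pred rv iv q
  end.

Fixpoint wf_term (nR nI : nat) (t : tterm) : bool :=
  match t with
  | TConst _ => true
  | SVar n => (n < nR)%N
  | IVar n => (n < nI)%N
  | TInc t => wf_term nR nI t
  | TDec t => wf_term nR nI t
  end.

Fixpoint wf_pred (nR nI : nat) (p : tpred) : bool :=
  match p with
  | PEq a b => wf_term nR nI a && wf_term nR nI b
  | PNot p => wf_pred nR nI p
  | PAnd p q => wf_pred nR nI p && wf_pred nR nI q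
  end.

Inductive tsl : Type :=
  | FPred of tpred
  | FUpd of nat & tterm
  | FTrue
  | FFalse
  | FNot of tsl
  | FAnd of tsl & tsl
  | FUntil of tsl & tsl
  | FNext of tsl.

Fixpoint wf_tsl (nR nI : nat) (f : tsl) : bool :=
  match f with
  | FPred p => wf_pred nR nI p
  | FUpd r e => (r < nR)%N && wf_term nR nI e
  | FTrue | FFalse => true
  | FNot f => wf_tsl nR nI f
  | FAnd f g => wf_tsl nR nI f && wf_tsl nR nI g
  | FUntil f g => wf_tsl nR nI f && wf_tsl nR nI g
  | FNext f => wf_tsl nR nI f
  end.

Fixpoint holds (rs ins : nat -> valuation) (j : nat) (f : tsl) : Prop :=
  match f with
  | FPred p => eval_pred (rs j) (ins j) p
  | FUpd r e => rs j.+1 r = eval_term (rs j) (ins j) e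
  | FTrue => True
  | FFalse => False
  | FNot f => ~ holds rs ins j f
  | FAnd f g => holds rs ins j f /\ holds rs ins j g
  | FUntil f g => exists k, (j <= k)%N /\ holds rs ins k g /\
                    forall m, (j <= m)%N -> (m < k)%N -> holds rs ins m f
  | FNext f => holds rs ins j.+1 f
  end.

(* The finite predicate set P ins given as a family P : 'I_k -> tpred;
   2^P ins {set 'I_k}; an update function ins u : nat -> tterm (u r for r in R). *)
Unset Implicit Arguments.
Record mealy : Type := Mealy {
  mQ : finType;
  mq0 : mQ;
  mk : nat;
  mP : 'I_mk -> tpred;
  mr0 : valuation;
  mdelta : mQ -> {set 'I_mk} -> mQ;
  mmu : mQ -> {set 'I_mk} -> nat -> tterm
}.
Set Implicit Arguments.

Definition wf_mealy (nR nI : nat) (M : mealy) : Prop :=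
  (forall p, wf_pred nR nI (mP M p)) /\
  (forall q s r, (r < nR)%N -> wf_term nR nI (mmu M q s r)).

Definition Pval (M : mealy) (rv iv : valuation) : {set 'I_(mk M)} :=
  [set p | eval_pred rv iv (mP M p)].

Definition apply_update (nR : nat) (u : nat -> tterm) (rv iv : valuation)
  : valuation := fun r => if (r < nR)%N then eval_term rv iv (u r) else 0.

Fixpoint mrun (nR : nat) (M : mealy) (ins : nat -> valuation) (k : nat)
  : mQ M * valuation :=
  match k with
  | 0 => (mq0 M, mr0 M)
  | k'.+1 =>
      let (q, rv) := mrun nR M ins k' in
      let s := Pval M rv (ins k') in
      (mdelta M q s, apply_update nR (mmu M q s) rv (ins k'))
  end.

Definition realizes (nR nI : nat) (M : mealy) (f : tsl) : Prop :=
  forall ins : nat -> valuation, holds (fun k => (mrun nR M ins k).2) ins 0 f.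

Definition realizable (nR nI : nat) (f : tsl) : Prop :=
  exists M : mealy, wf_mealy nR nI M /\ realizes nR nI M f.

Definition npair (a b : nat) : nat := (((a + b) * (a + b).+1)./2 + b)%N.

Definition enc_int (z : int) : nat :=
  match z with Posz n => n.*2 | Negz n => n.*2.+1 end.

Fixpoint enc_term (t : tterm) : nat :=
  match t with
  | TConst z => npair 0 (enc_int z)
  | SVar n => npair 1 n
  | IVar n => npair 2 n
  | TInc t => npair 3 (enc_term t)
  | TDec t => npair 4 (enc_term t)
  end.

Fixpoint enc_pred (p : tpred) : nat :=
  match p with
  | PEq a b => npair 0 (npair (enc_term a) (enc_term b))
  | PNot p => npair 1 (enc_pred p)
  | PAnd p q => npair 2 (npair (enc_pred p) (enc_pred q))
  end.

Fixpoint enc_tsl (f : tsl) : nat :=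
  match f with
  | FPred p => npair 0 (enc_pred p)
  | FUpd r e => npair 1 (npair r (enc_term e))
  | FTrue => npair 2 0
  | FFalse => npair 3 0
  | FNot f => npair 4 (enc_tsl f)
  | FAnd f g => npair 5 (npair (enc_tsl f) (enc_tsl g))
  | FUntil f g => npair 6 (npair (enc_tsl f) (enc_tsl g))
  | FNext f => npair 7 (enc_tsl f)
  end.

Definition enc_instance (nR nI : nat) (f : tsl) : nat :=
  npair nR (npair nI (enc_tsl f)).

(* The machine halts when the program counter leaves the program. *)
Inductive cinstr : Type := CInc of nat | CDec of nat & nat.

Definition cconfig := (nat * (nat -> nat))%type.

Definition cstep (P : seq cinstr) (c : cconfig) : cconfig :=
  let (pc, regs) := c in
  match nth (CInc 0) P pc, (pc < size P)%N with
  | _, false => c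
  | CInc r, true => (pc.+1, fun x => if x == r then (regs x).+1 else regs x)
  | CDec r j, true =>
      if regs r == 0%N then (j, regs)
      else (pc.+1, fun x => if x == r then (regs x).-1 else regs x)
  end.

Definition crun (P : seq cinstr) (t : nat) (c : cconfig) : cconfig :=
  iter t (cstep P) c.

Definition cinit (n : nat) : cconfig := (0%N, fun x => if x == 0%N then n else 0%N).

Definition cdecides_on (P : seq cinstr) (D Q : nat -> Prop) : Prop :=
  forall n, D n -> exists t,
    let c := crun P t (cinit n) in
    (size P <= c.1)%N /\ (Q n <-> c.2 0%N = 0%N).

(* Main.v *)
Require Import Defs.
From mathcomp Require Import all_boot all_algebra.
From mathcomp Require Import zify.
From Stdlib Require Import Classical FunctionalExtensionality.
Set Implicit Arguments. Unset Strict Implicit. Unset Printing Implicit Defensive.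


Definition reach (Q : seq cinstr) (c c' : cconfig) := exists t, crun Q t c = c'.

Lemma reach_refl Q c : reach Q c c.
Proof. by exists 0. Qed.
Lemma reach_trans Q c1 c2 c3 : reach Q c1 c2 -> reach Q c2 c3 -> reach Q c1 c3.
Proof. move=> [t1 <-] [t2 <-]; exists (t2 + t1); by rewrite /crun iterD. Qed.
Lemma reach_step Q c : reach Q c (cstep Q c).
Proof. by exists 1. Qed.

Definition incr (f : nat -> nat) r := fun x => if x == r then (f x).+1 else f x.
Definition decr (f : nat -> nat) r := fun x => if x == r then (f x).-1 else f x.

Definition blk Q a B := forall i, i < size B ->
  a + i < size Q /\ nth (CInc 0) Q (a + i) = nth (CInc 0) B i.

Lemma blk_cat Q a B1 B2 : blk Q a (B1 ++ B2) -> blk Q a B1 /\ blk Q (a + size B1) B2.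
Proof.
move=> H; split=> i Hi.
  have := H i; rewrite size_cat nth_cat Hi; apply; lia.
have := H (size B1 + i); rewrite size_cat nth_cat addnA.
have -> : (size B1 + i < size B1) = false by lia.
rewrite addKn; apply; lia.
Qed.

Lemma blk_full pre B post : blk (pre ++ B ++ post) (size pre) B.
Proof.
move=> i Hi; rewrite !size_cat nth_cat.
have -> : (size pre + i < size pre) = false by lia.
rewrite addKn nth_cat Hi; split=>//; lia.
Qed.

Lemma st_inc Q a B i p r f : blk Q a B -> i < size B -> nth (CInc 0) B i = CInc r ->
  p = a + i -> reach Q (p, f) (p.+1, incr f r).
Proof.
move=> H Hi Hn ->; have [H1 H2] := H i Hi; exists 1 => /=.
by rewrite /cstep H2 Hn H1.
Qed.

Lemma st_dec0 Q a B i p r j f : blk Q a B -> i < size B -> nth (CInc 0) B i = CDec r j ->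
  p = a + i -> f r = 0 -> reach Q (p, f) (j, f).
Proof.
move=> H Hi Hn -> Hz; have [H1 H2] := H i Hi; exists 1 => /=.
by rewrite /cstep H2 Hn H1 Hz eqxx.
Qed.

Lemma st_decS Q a B i p r j f : blk Q a B -> i < size B -> nth (CInc 0) B i = CDec r j ->
  p = a + i -> f r != 0 -> reach Q (p, f) (p.+1, decr f r).
Proof.
move=> H Hi Hn -> Hz; have [H1 H2] := H i Hi; exists 1 => /=.
by rewrite /cstep H2 Hn H1 (negbTE Hz).
Qed.

Lemma reach_eq Q c c1 c2 : reach Q c c1 -> c1 = c2 -> reach Q c c2.
Proof. by move=> H <-. Qed.

Lemma reach_pce Q a b b' f g : reach Q (a, f) (b, g) -> b = b' -> reach Q (a, f) (b', g).
Proof. by move=> H <-. Qed.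

Notation Z := 9%N.

Ltac pt := intros; rewrite /incr /decr /=; repeat (case: eqP => ? ; subst => //=); lia.

Definition mv a r s := [:: CDec r (a+3); CInc s; CDec Z a].

Lemma mv_ok Q a r s f g : blk Q a (mv a r s) -> r != s -> r != Z -> s != Z -> f Z = 0 ->
  (forall x, g x = if x == r then 0 else f x + (x == s) * f r) ->
  reach Q (a, f) (a + 3, g).
Proof.
move=> Hb Hrs HrZ HsZ.
elim: (f r) {-2}f (erefl (f r)) => [|n IH] f0 Hf HZ Hg.
  apply: reach_eq; first by apply: (@st_dec0 Q a (mv a r s) 0 a r (a+3)) => //; rewrite addn0.
  congr pair; apply: functional_extensionality => x; rewrite Hg; pt.
apply: reach_trans; first by apply: (@st_decS Q a (mv a r s) 0 a r (a+3)) => //; rewrite ?addn0 ?Hf.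
apply: reach_trans; first by apply: (@st_inc Q a (mv a r s) 1 a.+1 s) => //; rewrite addn1.
apply: reach_trans; first by apply: (@st_dec0 Q a (mv a r s) 2 a.+2 Z a) => //; [rewrite addn2 | pt].
apply: IH; first by pt.
  by pt.
move=> x; rewrite Hg; pt.
Qed.

Definition mv2 a r s t := [:: CDec r (a+4); CInc s; CInc t; CDec Z a].

Lemma mv2_ok Q a r s t f g : blk Q a (mv2 a r s t) -> r != s -> r != t -> r != Z -> s != Z -> t != Z -> f Z = 0 ->
  (forall x, g x = if x == r then 0 else f x + (x == s) * f r + (x == t) * f r) ->
  reach Q (a, f) (a + 4, g).
Proof.
move=> Hb Hrs Hrt HrZ HsZ HtZ.
elim: (f r) {-2}f (erefl (f r)) => [|n IH] f0 Hf HZ Hg.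
  apply: reach_eq; first by apply: (@st_dec0 Q a (mv2 a r s t) 0 a r (a+4)) => //; rewrite addn0.
  congr pair; apply: functional_extensionality => x; rewrite Hg; pt.
apply: reach_trans; first by apply: (@st_decS Q a (mv2 a r s t) 0 a r (a+4)) => //; rewrite ?addn0 ?Hf.
apply: reach_trans; first by apply: (@st_inc Q a (mv2 a r s t) 1 a.+1 s) => //; rewrite addn1.
apply: reach_trans; first by apply: (@st_inc Q a (mv2 a r s t) 2 a.+2 t) => //; rewrite addn2.
apply: reach_trans; first by apply: (@st_dec0 Q a (mv2 a r s t) 3 a.+3 Z a) => //; [rewrite addn3 | pt].
apply: IH; first by pt.
  by pt.
move=> x; rewrite Hg; pt.
Qed.

Definition setK r K := nseq K (CInc r).

Lemma setK_ok Q r K : forall a f g, blk Q a (setK r K) ->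
  (forall x, g x = f x + (x == r) * K) -> reach Q (a, f) (a + K, g).
Proof.
elim: K => [|K IH] a f g Hb Hg.
  rewrite addn0; apply: reach_eq; first exact: reach_refl.
  congr pair; apply: functional_extensionality => x; rewrite Hg; lia.
have [H1 H2] := blk_cat (B1 := [:: CInc r]) Hb.
apply: reach_trans; first by apply: (@st_inc Q a [:: CInc r] 0 a r) => //; rewrite addn0.
rewrite addnS -addSn; apply: IH; first by rewrite -addn1.
move=> x; rewrite Hg /incr; case: eqP => ?; lia.
Qed.

Definition T n := (n * n.+1)./2.

Lemma TS n : T n.+1 = T n + n.+1.
Proof.
rewrite /T.
have -> : n.+1 * n.+2 = n * n.+1 + (n.+1).*2 by rewrite -mul2n; lia.
by rewrite halfD odd_double andbF doubleK.
Qed.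

Definition loopB a y := [:: CDec 6 (a+10); CInc y] ++ mv2 (a+2) 6 y 7 ++ mv (a+6) 7 6 ++ [:: CDec Z a].

Lemma loop_ok Q a y : blk Q a (loopB a y) -> y != 6 -> y != 7 -> y != Z ->
  forall f g, f 7 = 0 -> f Z = 0 ->
  (forall x, g x = if x == 6 then 0 else f x + (x == y) * T (f 6)) ->
  reach Q (a, f) (a + 10, g).
Proof.
move=> Hb Hy6 Hy7 HyZ f.
have [Hb1 Hb'] := blk_cat Hb.
have [Hb2 Hb''] := blk_cat Hb'.
have [Hb3 Hb4] := blk_cat Hb''.
move: Hb2 Hb3 Hb4 => /= Hb2 Hb3 Hb4.
elim: (f 6) {-2}f (erefl (f 6)) => [|n IH] f0 Hf g H7 HZ Hg.
  apply: reach_eq; first by apply: (@st_dec0 Q a (loopB a y) 0 a 6 (a+10)) => //; rewrite addn0.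
  congr pair; apply: functional_extensionality => x; rewrite Hg Hf /T /=; pt.
apply: reach_trans; first by apply: (@st_decS Q a (loopB a y) 0 a 6 (a+10)) => //; rewrite ?addn0 ?Hf.
apply: reach_trans; first by apply: (@st_inc Q a (loopB a y) 1 a.+1 y) => //; rewrite addn1.
apply: reach_trans.
  have -> : a.+2 = a + 2 by lia.
  by apply: (mv2_ok (g := fun x => if x == 6 then 0 else incr (decr f0 6) y x + (x == y) * n + (x == 7) * n) Hb2); try pt. 
have E : a + 2 + 4 = a + 6 by lia.
rewrite E in Hb3 *.
apply: reach_trans.
  by apply: (mv_ok (g := fun x => if x == 7 then 0 else if x == 6 then n else f0 x + (x == y) * n.+1) Hb3); try pt.
apply: reach_trans; first by apply: (@st_dec0 Q (a + 2 + 4 + 3) [:: CDec Z a] 0 (a + 6 + 3) Z a) => //; try lia; pt.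
apply: IH => //; try pt.
move=> x; rewrite Hg Hf TS; pt.
Qed.

Definition npairM a x y := mv2 a y 6 8 ++ mv (a+4) x 6 ++ loopB (a+7) y ++ mv (a+17) 8 y.

Lemma npairM_ok Q a x y f g : blk Q a (npairM a x y) ->
  x != 6 -> x != 7 -> x != 8 -> x != Z -> y != 6 -> y != 7 -> y != 8 -> y != Z -> x != y ->
  f 6 = 0 -> f 7 = 0 -> f 8 = 0 -> f Z = 0 ->
  (forall z, g z = if z == x then 0 else if z == y then npair (f x) (f y) else f z) ->
  reach Q (a, f) (a + 20, g).
Proof.
move=> Hb ? ? ? ? ? ? ? ? ? H6 H7 H8 HZ Hg.
have [Hb1 Hb'] := blk_cat Hb.
have [Hb2 Hb''] := blk_cat Hb'.
have [Hb3 Hb4] := blk_cat Hb''.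
move: Hb2 Hb3 Hb4 => /=.
have -> : a + 4 + 3 = a + 7 by lia.
have -> : a + 7 + 10 = a + 17 by lia.
move=> Hb2 Hb3 Hb4.
apply: reach_trans.
  by apply: (mv2_ok (g := fun z => if z == y then 0 else f z + (z==6) * f y + (z==8)* f y) Hb1); try pt.
apply: reach_trans.
  by apply: (mv_ok (g := fun z => if z == x then 0 else if z == y then 0 else if z == 6 then f x + f y else if z == 8 then f y else f z) Hb2); try pt.
rewrite (_ : a + 4 + 3 = a + 7); last lia.
apply: reach_trans.
  by apply: (@loop_ok Q (a+7) y Hb3 _ _ _ _ (fun z => if z == x then 0 else if z == y then T (f x + f y) else if z == 8 then f y else if z == 6 then 0 else f z)); try pt.
rewrite (_ : a + 7 + 10 = a + 17); last lia.
apply: reach_pce.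
  by apply: (mv_ok (g := g) Hb4); try pt; move=> z; rewrite Hg /npair -/(T _); pt.
lia.
Qed.

Definition stG (a2 v : nat) := fun x => if x == 2 then a2 else if x == 4 then v else 0.

Definition npK a K := setK 5 K ++ npairM (a+K) 5 4.

Lemma npK_ok Q a K a2 v : blk Q a (npK a K) ->
  reach Q (a, stG a2 v) (a + K + 20, stG a2 (npair K v)).
Proof.
move=> Hb; have [Hb1 Hb2] := blk_cat Hb; rewrite size_nseq in Hb2.
apply: reach_trans.
  by apply: (setK_ok (g := fun x => if x == 5 then K else stG a2 v x) Hb1); move=> x; rewrite /stG; pt.
by apply: (npairM_ok Hb2); try (rewrite /stG; pt); move=> z; rewrite /stG; pt.
Qed.

Lemma npA_ok Q a a2 v : blk Q a (npairM a 2 4) ->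
  reach Q (a, stG a2 v) (a + 20, stG 0 (npair a2 v)).
Proof.
by move=> Hb; apply: (npairM_ok Hb); try (rewrite /stG; pt); move=> z; rewrite /stG; pt.
Qed.

Lemma blk_app Q a B1 B2 b : blk Q a (B1 ++ B2) -> a + size B1 = b -> blk Q a B1 /\ blk Q b B2.
Proof. by move=> /blk_cat [H1 H2] <-. Qed.

Definition Gprog nR := mv2 0 1 2 3 ++ mv2 4 3 4 4 ++ npK 8 0 ++ npK 28 8 ++ npK 56 0 ++ npK 76 0 ++
  npairM 96 2 4 ++ npK 116 5 ++ npK 141 0 ++ npK 161 nR ++ mv (181 + nR) 4 0.

Definition gval nR A := npair nR (npair 0 (npair 5 (npair A (npair 0 (npair 0 (npair 8 (npair 0 (A.*2)))))))).

Lemma size_npK a K : size (npK a K) = K + 20.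
Proof. by rewrite size_cat size_nseq. Qed.

Lemma size_G nR : size (Gprog nR) = 184 + nR.
Proof. rewrite /Gprog !size_cat !size_nseq /=; lia. Qed.

Lemma G_ok Q nR A : blk Q 0 (Gprog nR) ->
  reach Q (0, fun x => if x == 1 then A else 0) (184 + nR, (cinit (gval nR A)).2).
Proof.
move=> Hb.
have [b1 Hb'] := blk_app (b := 4) Hb erefl.
have [b2 {}Hb'] := blk_app (b := 8) Hb' erefl.
have [b3 {}Hb'] := blk_app (b := 28) Hb' erefl.
have [b4 {}Hb'] := blk_app (b := 56) Hb' erefl.
have [b5 {}Hb'] := blk_app (b := 76) Hb' erefl.
have [b6 {}Hb'] := blk_app (b := 96) Hb' erefl.
have [b7 {}Hb'] := blk_app (b := 116) Hb' erefl.
have [b8 {}Hb'] := blk_app (b := 141) Hb' erefl.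
have [b9 {}Hb'] := blk_app (b := 161) Hb' erefl.
have [b10 b11] := blk_app (b := 181 + nR) Hb' (ltac:(rewrite size_npK; lia)).
apply: reach_trans.
  by apply: (mv2_ok (g := fun x => if x == 2 then A else if x == 3 then A else 0) b1); try pt.
apply: reach_trans.
  by apply: (mv2_ok (g := stG A (A.*2)) b2); try pt; move=> x; rewrite /stG; pt.
apply: reach_trans; first exact: (npK_ok _ _ b3).
apply: reach_trans; first exact: (npK_ok _ _ b4).
apply: reach_trans; first exact: (npK_ok _ _ b5).
apply: reach_trans; first exact: (npK_ok _ _ b6).
apply: reach_trans; first exact: (npA_ok _ _ b7).
apply: reach_trans; first exact: (npK_ok _ _ b8).
apply: reach_trans; first exact: (npK_ok _ _ b9).
apply: reach_trans; first exact: (npK_ok _ _ b10).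
rewrite (_ : 161 + nR + 20 = 181 + nR); last lia.
apply: reach_pce.
  by apply: (mv_ok (g := (cinit (gval nR A)).2) b11); rewrite /stG /gval /=; pt.
lia.
Qed.

Lemma halted_fix Q c : size Q <= c.1 -> cstep Q c = c.
Proof.
case: c => pc f /= H; rewrite /cstep.
have -> : (pc < size Q) = false by lia.
by case: nth.
Qed.

Lemma iter_fix Q c t : cstep Q c = c -> crun Q t c = c.
Proof. move=> H; elim: t => // t IH; by rewrite /crun iterS -/(crun Q t c) IH. Qed.

Definition shI (k n : nat) (i : cinstr) :=
  match i with CInc r => CInc r | CDec r j => CDec r (k + minn j n) end.

Lemma Psim Q P k : blk Q k (map (shI k (size P)) P) ->
  forall t c, reach Q (k + minn c.1 (size P), c.2) (k + minn (crun P t c).1 (size P), (crun P t c).2).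
Proof.
move=> Hb; elim=> [|t IH] c; first exact: reach_refl.
apply: reach_trans; first exact: (IH c).
rewrite /crun iterS -/(crun P t c).
case: (crun P t c) => pc f.
case Hs: (pc < size P); last first.
  rewrite halted_fix /=; last lia.
  exact: reach_refl.
have Hsz : pc < size (map (shI k (size P)) P) by rewrite size_map.
have Hn := nth_map (CInc 0) (CInc 0) (shI k (size P)) Hs.
rewrite /cstep Hs.
have -> : minn pc (size P) = pc by lia.
case E: (nth (CInc 0) P pc) Hn => [r|r j] /= Hn.
  have -> : minn pc.+1 (size P) = pc.+1 by lia.
  rewrite addnS; apply: (@st_inc Q k (map (shI k (size P)) P) pc) => //.
case: eqP => Hz.
  by apply: (@st_dec0 Q k (map (shI k (size P)) P) pc (k + pc) r (k + minn j (size P))) => //.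
have -> : minn pc.+1 (size P) = pc.+1 by lia.
rewrite addnS; apply: (@st_decS Q k (map (shI k (size P)) P) pc (k + pc) r (k + minn j (size P))) => //; by apply/eqP.
Qed.


Definition ireg i := match i with CInc r => r | CDec r _ => r end.
Definition bigAnd (l : seq tsl) := foldr FAnd FTrue l.
Definition fImp a b := FNot (FAnd a (FNot b)).
Definition fG f := FNot (FUntil FTrue (FNot f)).
Definition fF f := FUntil FTrue f.
Definition pcEq (i : nat) := PEq (SVar 0) (TConst (Posz i)).
Definition keepL m k := map (fun x => FUpd x.+1 (SVar x.+1)) [seq x <- iota 0 m | x != k].
Definition incF m r := FAnd (FUpd 0 (TInc (SVar 0))) (FAnd (FUpd r.+1 (TInc (SVar r.+1))) (bigAnd (keepL m r))).
Definition decF m r := FAnd (FUpd 0 (TInc (SVar 0))) (FAnd (FUpd r.+1 (TDec (SVar r.+1))) (bigAnd (keepL m r))).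
Definition zeroP r := PEq (SVar r.+1) (TConst 0).
Definition instrF m i := match i with
  | CInc r => incF m r
  | CDec r j => FAnd (fImp (FPred (zeroP r)) (FAnd (FUpd 0 (TConst (Posz j))) (bigAnd (keepL m m))))
                     (fImp (FNot (FPred (zeroP r))) (decF m r)) end.
Definition stepF (Q : seq cinstr) m := bigAnd (map (fun i => fImp (FPred (pcEq i)) (instrF m (nth (CInc 0) Q i))) (iota 0 (size Q))).
Definition initF m := FAnd (FPred (pcEq 0)) (bigAnd (map (fun x => FPred (PEq (SVar x.+1) (TConst 0))) [seq x <- iota 0 m | x != 1])).
Definition haltF (Q : seq cinstr) := bigAnd (map (fun i => FNot (FPred (pcEq i))) (iota 0 (size Q))).
Definition simF Q m := FAnd (initF m) (FAnd (fG (stepF Q m)) (fF (haltF Q))).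
Definition phiF Q m A := FAnd (simF Q m) (FPred (PEq (SVar 2) (TConst (Posz A)))).

Definition c0 A : cconfig := (0, fun x => if x == 1 then A else 0).

Section H.
Variables (rs ins : nat -> valuation).

Lemma holds_bigAnd j (F : nat -> tsl) l :
  holds rs ins j (bigAnd (map F l)) <-> (forall x, x \in l -> holds rs ins j (F x)).
Proof.
elim: l => [|y l IH] /=; first by split=> // _ x.
rewrite IH; split.
  by move=> [H1 H2] x; rewrite in_cons => /orP [/eqP -> | /H2].
move=> H; split; first by apply: H; rewrite in_cons eqxx.
by move=> x Hx; apply: H; rewrite in_cons Hx orbT.
Qed.

Lemma holds_fImp j a b : holds rs ins j (fImp a b) <-> (holds rs ins j a -> holds rs ins j b).
Proof. split=> /= H; last tauto. move=> Ha; apply: NNPP => Hb; tauto. Qed.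

Lemma holds_fG j f : holds rs ins j (fG f) <-> forall k, j <= k -> holds rs ins k f.
Proof.
split=> /= H.
  move=> k Hk; apply: NNPP => Hn; apply: H; exists k; split=> //; split=> //.
by move=> [k [Hk [Hn _]]]; apply: Hn; apply: H.
Qed.

Lemma holds_fF j f : holds rs ins j (fF f) <-> exists k, j <= k /\ holds rs ins k f.
Proof. split=> /=; [move=> [k [? [? _]]]; by exists k | move=> [k [? ?]]; by exists k]. Qed.

Lemma holds_keep j m k :
  holds rs ins j (bigAnd (keepL m k)) <-> (forall x, x < m -> x != k -> rs j.+1 x.+1 = rs j x.+1).
Proof.
rewrite /keepL holds_bigAnd; split=> H x.
  by move=> Hx Hk; apply: (H x); rewrite mem_filter mem_iota Hk; lia.
by rewrite mem_filter mem_iota => /andP [Hk Hx] /=; apply: H => //; lia.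
Qed.
End H.

Definition mat m (c : cconfig) (v : valuation) :=
  v 0 = Posz c.1 /\ forall x, x < m -> v x.+1 = Posz (c.2 x).

Lemma instr_iff Q m rs ins k c : all (fun i => ireg i < m) Q ->
  mat m c (rs k) -> c.1 < size Q ->
  (holds rs ins k (instrF m (nth (CInc 0) Q c.1)) <-> mat m (cstep Q c) (rs k.+1)).
Proof.
move=> /all_nthP Hall; case: c => pc f [H0 Hx] /= Hs; rewrite /= in H0 Hx.
have := Hall (CInc 0) pc Hs.
rewrite /cstep Hs.
case: (nth (CInc 0) Q pc) => [r|r j] /= Hr.
  rewrite /mat /= holds_keep H0 Hx //; split.
    move=> [E0 [Er Ek]]; split; first by rewrite E0; lia.
    move=> x Hxm; case: eqP => Exr.
      by subst; rewrite Er; lia.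
    by rewrite Ek ?Hx //; apply/eqP.
  move=> [E0 Ek]; split; first by rewrite E0; lia.
  split; first by rewrite Ek // eqxx; lia.
  move=> x Hxm Hxr; rewrite Ek // Hx //; by rewrite (negbTE Hxr).
rewrite Hx // !holds_keep.
have [Hz|Hz] := eqVneq (f r) 0.
  rewrite Hz eqxx /mat /=; split.
    move=> [H1 _].
    have [E0 Ek] : rs k.+1 0 = Posz j /\ (forall x, x < m -> x != m -> rs k.+1 x.+1 = rs k x.+1).
      apply: NNPP => Hn; apply: H1; split=> //.
    split=> // x Hxm; rewrite Ek ?Hx //; lia.
  move=> [E0 Ek]; split.
    move=> [_ Hn]; apply: Hn; split=> // x Hxm _; rewrite Ek // Hx //.
  by move=> [Hn _]; apply: Hn.
have Hz' : (Posz (f r) == 0%R) = false by apply/negbTE; move: Hz; apply: contra => /eqP [] ->.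
rewrite Hz' H0; split.
  move=> [_ H2].
  have [E0 [Er Ek]] : rs k.+1 0 = (Posz pc + 1)%R /\ rs k.+1 r.+1 = (Posz (f r) - 1)%R /\ (forall x, x < m -> x != r -> rs k.+1 x.+1 = rs k x.+1).
    apply: NNPP => Hn; apply: H2; split=> //.
  rewrite /mat /=.
  split; first by rewrite E0; lia.
  move=> x Hxm; case: eqP => Exr.
    subst; rewrite Er; lia.
  by rewrite Ek ?Hx //; apply/eqP.
move=> [E0 Ek]; rewrite /= in E0 Ek; split; first by move=> [].
move=> [_ Hn]; apply: Hn.
split; first by rewrite E0; lia.
split; first by rewrite Ek // eqxx; lia.
move=> x Hxm Hxr; rewrite Ek // Hx //; by rewrite (negbTE Hxr).
Qed.

Lemma crun_S Q t c : crun Q t.+1 c = cstep Q (crun Q t c).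
Proof. by rewrite /crun iterS. Qed.

Lemma sim_halts Q m A rs ins : all (fun i => ireg i < m) Q -> 1 < m ->
  holds rs ins 0 (phiF Q m A) -> exists t, size Q <= (crun Q t (c0 A)).1.
Proof.
move=> Hall Hm [[[Hpc Hinit] [HG HF]] HA].
rewrite /= in Hpc HA; move/eqP: Hpc => Hpc; move/eqP: HA => HA.
move: Hinit => /holds_bigAnd Hinit.
move: HG => /holds_fG HG; move: HF => /holds_fF [kh [_ HF]].
apply: NNPP => Hn.
have Hlt : forall t, (crun Q t (c0 A)).1 < size Q.
  move=> t; case: (ltnP (crun Q t (c0 A)).1 (size Q)) => // H; exfalso; apply: Hn; by exists t.
have Hmat : forall k, mat m (crun Q k (c0 A)) (rs k).
  elim=> [|k IH].
    split=> //= x Hx; case: eqP => Ex; first by subst.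
    have := Hinit x; rewrite mem_filter mem_iota /= => H.
    apply/eqP; apply: H; apply/andP; split; [by apply/eqP | lia].
  rewrite crun_S; apply/(@instr_iff Q m rs ins k (crun Q k (c0 A)) Hall IH (Hlt k)).
  have Hi : (crun Q k (c0 A)).1 \in iota 0 (size Q) by rewrite mem_iota; have := Hlt k; lia.
  have := HG k (leq0n _); move/holds_bigAnd => /(_ _ Hi) /holds_fImp; apply.
  by rewrite /= (proj1 IH).
have Hi : (crun Q kh (c0 A)).1 \in iota 0 (size Q) by rewrite mem_iota; have := Hlt kh; lia.
move: HF => /holds_bigAnd /(_ _ Hi) /=.
by rewrite (proj1 (Hmat kh)) eqxx.
Qed.

Definition embedR m (c : cconfig) : valuation :=
  fun r => if r < m.+1 then (if r is x.+1 then Posz (c.2 x) else Posz c.1) else 0%R.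

Lemma mat_embed m c : mat m c (embedR m c).
Proof. split=> // x Hx; rewrite /embedR ifT //; lia. Qed.

Lemma trace_holds Q m A T ins : all (fun i => ireg i < m) Q -> 1 < m ->
  size Q <= (crun Q T (c0 A)).1 ->
  holds (fun k => embedR m (crun Q k (c0 A))) ins 0 (phiF Q m A).
Proof.
move=> Hall Hm HT.
set rs := fun k => embedR m (crun Q k (c0 A)).
split; [split; [split | split] | ].
- by rewrite /= /rs /embedR /=.
- apply/holds_bigAnd => x; rewrite mem_filter mem_iota => /andP [Hx1 Hx].
  rewrite /= /rs /embedR /= ifT; last lia.
  by rewrite (negbTE Hx1).
- apply/holds_fG => k _; apply/holds_bigAnd => i; rewrite mem_iota => Hi.
  apply/holds_fImp => /= /eqP Hpc.
  have Hc : (crun Q k (c0 A)).1 = i by move: Hpc; rewrite /rs /embedR /= => -[].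
  have := @instr_iff Q m rs ins k (crun Q k (c0 A)) Hall (mat_embed _ _).
  rewrite Hc => H; apply/H; first lia.
  rewrite /rs -crun_S; exact: mat_embed.
- apply/holds_fF; exists T; split=> //; apply/holds_bigAnd => i; rewrite mem_iota => Hi /=.
  rewrite /rs /embedR /= => /eqP [E]; lia.
- rewrite /= /rs /embedR /= ifT //; lia.
Qed.

Lemma crun_after Q c T k : size Q <= (crun Q T c).1 -> T <= k -> crun Q k c = crun Q T c.
Proof.
move=> H Hk; rewrite -(subnK Hk) /crun iterD -/(crun Q T c).
by apply: iter_fix; apply: halted_fix.
Qed.

Definition Mh Q m A T : mealy :=
  @Mealy 'I_T.+1 ord0 0 (fun _ => PEq (TConst 0) (TConst 0)) (embedR m (c0 A))
    (fun q _ => inord (minn q.+1 T)) (fun q _ r => TConst (embedR m (crun Q q.+1 (c0 A)) r)).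

Lemma mrun_eq Q m A T ins : size Q <= (crun Q T (c0 A)).1 -> forall k,
  nat_of_ord (mrun m.+1 (Mh Q m A T) ins k).1 = minn k T /\
  (mrun m.+1 (Mh Q m A T) ins k).2 = embedR m (crun Q k (c0 A)).
Proof.
move=> HT; elim=> [|k IH]; first by split=> //; rewrite /= min0n.
rewrite /=; move: IH; case: (mrun m.+1 (Mh Q m A T) ins k) => q rv /= [Hq ->].
split; first by rewrite inordK Hq; lia.
apply: functional_extensionality => r; rewrite /apply_update Hq /=.
rewrite -!crun_S.
have -> : crun Q (minn k T).+1 (c0 A) = crun Q k.+1 (c0 A).
  case: (ltnP k T) => Hk.
    by [].
  rewrite (crun_after HT (leqnSn T)) (crun_after HT) //; lia.
by case: ifP => // H; rewrite /embedR H.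
Qed.

Lemma tsl_main Q m A : all (fun i => ireg i < m) Q -> 1 < m ->
  realizable m.+1 0 (phiF Q m A) <-> exists t, size Q <= (crun Q t (c0 A)).1.
Proof.
move=> Hall Hm; split.
  move=> [M [_ HM]].
  exact: (sim_halts (ins := fun _ _ => 0%R) Hall Hm (HM (fun _ _ => 0%R))).
move=> [T HT]; exists (Mh Q m A T); split.
  by split.
move=> ins.
have -> : (fun k => (mrun m.+1 (Mh Q m A T) ins k).2) = (fun k => embedR m (crun Q k (c0 A))).
  by apply: functional_extensionality => k; case: (@mrun_eq Q m A T ins HT k).
exact: (@trace_holds Q m A T ins Hall Hm HT).
Qed.


Lemma wf_bigAnd nR nI l : wf_tsl nR nI (bigAnd l) = all (wf_tsl nR nI) l.
Proof. by elim: l => //= a l ->. Qed.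

Lemma wf_phi Q m A : all (fun i => ireg i < m) Q -> 1 < m -> wf_tsl m.+1 0 (phiF Q m A).
Proof.
move=> Hall Hm.
have Hk : forall k, wf_tsl m.+1 0 (bigAnd (keepL m k)).
  move=> k; rewrite wf_bigAnd all_map; apply/allP => x; rewrite mem_filter mem_iota /=; lia.
rewrite /phiF /simF /initF /fG /fF /= !wf_bigAnd !all_map.
rewrite andbT; apply/andP; split; last lia.
apply/and3P; split.
- apply/allP => x; rewrite mem_filter mem_iota /=; lia.
- apply/allP => i; rewrite mem_iota /= => Hi.
  have := (all_nthP (CInc 0) Hall) i ltac:(lia).
  case: nth => [r|r j] /= Hr; rewrite ?Hk /=; lia.
- by apply/allP.
Qed.

Definition maxr (P : seq cinstr) := foldr maxn 0 (map ireg P).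

Lemma maxr_all P : all (fun i => ireg i <= maxr P) P.
Proof.
elim: P => //= i P IH; rewrite leq_maxl /=.
by apply: sub_all IH => x /= H; apply: (leq_trans H); rewrite leq_maxr.
Qed.

Lemma G_regs nR : all (fun i => ireg i <= 9) (Gprog nR).
Proof. by rewrite /Gprog /npK /npairM /loopB /mv2 /mv /setK !all_cat !all_nseq /= orbT. Qed.

Lemma no_halt Q c L t : reach Q c L -> cstep Q L = L -> size Q <= (crun Q t c).1 -> size Q <= L.1.
Proof.
move=> [t1 H1] HL Ht.
have E1 : crun Q (t + t1) c = L by rewrite /crun iterD -/(crun Q t1 c) H1; exact: iter_fix.
have E2 : crun Q (t1 + t) c = crun Q t c.
  by rewrite /crun iterD -/(crun Q t c); apply: iter_fix; apply: halted_fix.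
by rewrite -E1 addnC E2.
Qed.


Lemma enc_phi Q m A : enc_instance m.+1 0 (phiF Q m A) =
  npair m.+1 (npair 0 (npair 5 (npair (enc_tsl (simF Q m)) (npair 0 (npair 0 (npair 8 (npair 0 A.*2))))))).
Proof. reflexivity. Qed.

Lemma diag P m k Q A :
  (forall (nR nI : nat) (f : tsl), wf_tsl nR nI f ->
        exists t,
          let c := crun P t (cinit (enc_instance nR nI f)) in
          (size P <= c.1)%N /\ (realizable nR nI f <-> c.2 0%N = 0%N)) ->
  1 < m -> all (fun i => ireg i < m) Q -> k = 184 + m.+1 ->
  Q = Gprog m.+1 ++ map (shI k (size P)) P ++ [:: CDec 0 (k + size P)] ->
  A = enc_tsl (simF Q m) -> False.
Proof.
move=> HP Hm Hall Hk HQ HA.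
have [t /= [Hh Hiff]] := HP m.+1 0 (phiF Q m A) (wf_phi A Hall Hm).
have Henc : enc_instance m.+1 0 (phiF Q m A) = gval m.+1 A by rewrite enc_phi -HA.
rewrite Henc in Hh Hiff.
have R1 : reach Q (c0 A) (k, (cinit (gval m.+1 A)).2).
  rewrite Hk /c0; apply: (@G_ok Q m.+1 A); rewrite HQ; exact (@blk_full [::] _ _).
move: Hh Hiff R1; move: (gval m.+1 A) => n Hh Hiff R1.
have HsG : size (Gprog m.+1) = k by rewrite size_G Hk.
have R2 := @Psim Q P k ltac:(rewrite HQ -HsG; exact: blk_full) t (cinit n).
rewrite /= min0n addn0 (_ : minn _ (size P) = size P) in R2; last lia.
move: R2 Hiff; move: (crun P t (cinit n)).2 => ft R2 Hiff.
have R := reach_trans R1 R2.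
move: R; move Hp: (k + size P) => p R.
have Hsz : size Q = p.+1 by rewrite HQ size_cat HsG size_cat size_map /=; lia.
have Hnth : nth (CInc 0) Q p = CDec 0 p.
  rewrite HQ nth_cat HsG ifN; last lia.
  rewrite nth_cat size_map ifN; last lia.
  by rewrite Hp (_ : p - k - size P = 0) //; lia.
have Hst : cstep Q (p, ft) = if ft 0 == 0 then (p, ft) else (p.+1, decr ft 0).
  by rewrite /cstep Hnth Hsz ltnSn.
case: (eqVneq (ft 0) 0) => Hz.
  rewrite Hz eqxx in Hst.
  have Hr : realizable m.+1 0 (phiF Q m A) by apply/Hiff.
  have [t' Ht'] := (tsl_main A Hall Hm).1 Hr.
  have := no_halt R Hst Ht'; rewrite Hsz /=; lia.
rewrite (negbTE Hz) in Hst.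
have : realizable m.+1 0 (phiF Q m A).
  apply/(tsl_main A Hall Hm).
  have [t2 Ht2] := reach_trans R (reach_step Q (p, ft)).
  by exists t2; rewrite Ht2 Hst Hsz.
by move/Hiff; apply/eqP.
Qed.

Theorem mainTheorem1 :
  ~ exists P : seq cinstr,
      forall (nR nI : nat) (f : tsl), wf_tsl nR nI f ->
        exists t,
          let c := crun P t (cinit (enc_instance nR nI f)) in
          (size P <= c.1)%N /\ (realizable nR nI f <-> c.2 0%N = 0%N).
Proof.
move=> [P HP].
have [m [Hm10 HmP]] : exists m, 10 <= m /\ maxr P < m by exists (maxn 10 (maxr P).+1); lia.
have Hm : 1 < m by lia.
have Hall : all (fun i => ireg i < m)
   (Gprog m.+1 ++ map (shI (184 + m.+1) (size P)) P ++ [:: CDec 0 (184 + m.+1 + size P)]).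
  rewrite all_cat; apply/andP; split.
    by apply: sub_all (G_regs _) => x /=; lia.
  rewrite all_cat all_map /= andbT; apply/andP; split; last lia.
  apply: sub_all (maxr_all P) => x /=; case: x => [r|r j] /=; lia.
exact: (diag HP Hm Hall erefl erefl erefl).
Qed.
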